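(* Let $P$ be a set of $n$ points in $\mathbb R$ and let $H$ be the hypergraph induced by $P$ with respect to intervals (vertex set $P$, hyperedges all nonempty sets $I\cap P$ with $I$ an interval). Then $\mathrm{ch}_{um}(H)\le\log_2 n+1$.
   Context: A coloring $C\colon V\to\mathbb Z_{>0}$ of a hypergraph is unique-maximum if in every hyperedge the maximum color is attained by exactly one vertex. The um-choice number $\mathrm{ch}_{um}(H)$ is the minimum $k$ such that for every family $\{L_v\}_{v\in V}$ of sets of positive integers with $|L_v|\ge k$ there is a unique-maximum coloring $C$ with $C(v)\in L_v$ for all $v$. *)

(* Defs.v *)
From HB Require Import structures.
From mathcomp Require Import all_boot all_order all_algebra.
Set Implicit Arguments. Unset Strict Implicit. Unset Printing Implicit Defensive.
Import Order.TTheory GRing.Theory Num.Theory.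

Definition is_interval (R : realFieldType) (I : R -> Prop) : Prop :=
  forall x y z : R, I x -> I z -> (x <= y)%R -> (y <= z)%R -> I y.

Definition interval_hyperedge (R : realFieldType) (P : seq R) (e : R -> Prop)
  : Prop :=
  (exists I : R -> Prop, is_interval I /\ forall x, e x <-> (x \in P /\ I x))
  /\ (exists x, e x).

Definition um_coloring (V : Type) (E : (V -> Prop) -> Prop) (C : V -> nat)
  : Prop :=
  forall e, E e ->
    exists u, e u /\ forall w, e w -> w <> u -> C w < C u.

(* "|L| >= k" for a (possibly infinite) set L of naturals. *)
Definition card_ge (L : nat -> Prop) (k : nat) : Prop :=
  exists s : seq nat, uniq s /\ k <= size s /\ forall c, c \in s -> L c.

Definition um_choosable (V : Type) (Vset : V -> Prop)
  (E : (V -> Prop) -> Prop) (k : nat) : Prop :=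
  forall L : V -> nat -> Prop,
    (forall v, Vset v -> (forall c, L v c -> 0 < c) /\ card_ge (L v) k) ->
    exists C : V -> nat,
      (forall v, Vset v -> L v (C v)) /\ um_coloring E C.

(* Main.v *)
Require Import Defs.
From HB Require Import structures.
From mathcomp Require Import all_boot all_order all_algebra.
From Stdlib Require Import ClassicalEpsilon.

Lemma max_in (s : seq nat) : s != [::] -> \max_(c <- s) c \in s.
Proof.
elim: s => [//|x s IH] _; rewrite big_cons.
case: s IH => [|y s'] IH; first by rewrite big_nil maxn0 mem_seq1.
have := IH isT; set M := \max_(_ <- _) _ => HM.
rewrite /maxn; case: ifP => _; first by rewrite in_cons HM orbT.
by rewrite mem_head.
Qed.

Lemma size_rem_le (T : eqType) (x : T) (s : seq T) : size (rem x s) <= size s.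
Proof.
case H: (x \in s); first by rewrite size_rem // leq_pred.
by rewrite rem_id // H.
Qed.

Lemma core k n : forall a b (l : nat -> seq nat), b - a < n ->
  (forall i, a <= i < b -> uniq (l i) /\ size (l i) <= k) ->
  \sum_(a <= i < b) 2 ^ (k - size (l i)) < 2 ^ k ->
  exists C : nat -> nat, (forall i, a <= i < b -> C i \in l i) /\
   (forall c d, a <= c -> c <= d -> d < b ->
      exists u, c <= u <= d /\ forall w, c <= w <= d -> w != u -> C w < C u).
Proof.
elim: n => [//|n IH] a b l Hn Hl Hs.
case: (leqP b a) => Hab.
  exists id; split => [i /andP [H1 H2]|c d H1 H2 H3]; exfalso.
    by have := leq_ltn_trans H1 H2; rewrite ltnNge Hab.
  by have := leq_ltn_trans (leq_trans H1 H2) H3; rewrite ltnNge Hab.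
pose w := fun i => 2 ^ (k - size (l i)).
pose fl := flatten [seq l i | i <- index_iota a b].
pose m := \max_(c <- fl) c.
have Hla : l a != [::].
  apply/eqP => E. move: Hs; rewrite big_ltn // E /= subn0 => H.
  by have := leq_ltn_trans (leq_addr _ _) H; rewrite ltnn.
have mfl : m \in fl.
  apply: max_in.
  case Ela: (l a) Hla => [//|x0 t] _.
  have : x0 \in fl.
    by apply/flatten_mapP; exists a; [rewrite mem_index_iota leqnn Hab | rewrite Ela mem_head].
  by move=> H; apply/eqP => E; rewrite E in H.
have Hbound : forall i c, a <= i < b -> c \in l i -> c <= m.
  move=> i c Hi Hc; apply: (leq_bigmax_seq (F:=id) c) => //.
  by apply/flatten_mapP; exists i => //; rewrite mem_index_iota.
case/flatten_mapP: mfl => i0; rewrite mem_index_iota => Hi0 Hm0.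
pose l' := fun i => rem m (l i).
pose w' := fun i => 2 ^ (k - size (l' i)).
have Hw' : forall i, a <= i < b -> w' i = w i + (m \in l i) * w i.
  move=> i Hi; rewrite /w' /w /l'.
  case Si: (m \in l i); last by rewrite rem_id ?Si // mul0n addn0.
  rewrite size_rem // mul1n.
  have [_ Hk] := Hl i Hi.
  case El: (l i) Si Hk => [//|x s] _ Hk /=.
  by rewrite addnn -mul2n -expnS -(subSn Hk) subSS.
pose D := fun x y => \sum_(x <= i < y) w' i.
pose W := fun x y => \sum_(x <= i < y) w i.
have HDW : forall x y, a <= x -> y <= b -> (forall i, x <= i < y -> m \notin l i) ->
   D x y = W x y.
  move=> x y Hx Hy Hno; apply: eq_big_nat => i /andP [H1 H2].
  rewrite Hw'; last by rewrite (leq_trans Hx H1) (leq_trans H2 Hy).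
  by rewrite (negbTE (Hno i _)) ?H1 ?H2 // mul0n addn0.
have Wsplit : forall x y z, x <= y -> y <= z -> W x z = W x y + W y z.
  by move=> x y z H1 H2; rewrite /W (big_cat_nat H1 H2).
have Dsplit : forall x y z, x <= y -> y <= z -> D x z = D x y + D y z.
  by move=> x y z H1 H2; rewrite /D (big_cat_nat H1 H2).
have exJ : exists i, [&& a <= i, i < b & m \in l i].
  by exists i0; rewrite Hm0 andbT.
case: (ex_minnP exJ) => j0 /and3P [Ha0 Hb0 Sj0] Hmin.
have QJ : D a j0 < 2 ^ k.
  rewrite HDW //; last 2 first.
  - exact: ltnW.
  - move=> i /andP [H1 H2]; apply/negP => Si.
    by have := Hmin i; rewrite H1 Si (ltn_trans H2 Hb0) => /(_ isT); rewrite leqNgt H2.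
  by apply: leq_ltn_trans Hs; rewrite -/(W a b) (Wsplit a j0 b) // ?leq_addr // ltnW.
have exQ : exists i, [&& a <= i, i < b, m \in l i & D a i < 2 ^ k].
  by exists j0; rewrite Ha0 Hb0 Sj0 QJ.
have ubQ : forall i, [&& a <= i, i < b, m \in l i & D a i < 2 ^ k] -> i <= b.
  by move=> i /and4P [_ H _ _]; exact: ltnW.
case: (ex_maxnP exQ ubQ) => v /and4P [Hav Hvb Sv HDv] Hmax.
have exU : exists i, (v < i) && ((b <= i) || (m \in l i)).
  by exists b; rewrite Hvb leqnn.
case: (ex_minnP exU) => u /andP [Hvu Hu] Hminu.
have Hub : u <= b by apply: Hminu; rewrite Hvb leqnn.
have Hnos : forall i, v < i < u -> m \notin l i.
  move=> i /andP [H1 H2]; apply/negP => Si.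
  by have := Hminu i; rewrite H1 Si orbT => /(_ isT); rewrite leqNgt H2.
have Hav1 : a <= v.+1 by apply: (leq_trans Hav).
have HR : D v.+1 b < 2 ^ k.
  move: Hub; rewrite leq_eqVlt => /orP [/eqP Eub | Hub].
    rewrite HDW //; last by move=> i Hi; apply: Hnos; rewrite Eub.
    apply: leq_ltn_trans Hs; rewrite -/(W a b) (Wsplit a v.+1 b) // ?leq_addl //.
  have Su : m \in l u by move: Hu; rewrite leqNgt Hub.
  have Hau : a <= u by apply: leq_trans Hav (ltnW Hvu).
  have HDu : 2 ^ k <= D a u.
    rewrite leqNgt; apply/negP => H.
    by have := Hmax u; rewrite Hau Hub Su H => /(_ isT); rewrite leqNgt Hvu.
  have H1 : D v.+1 b + D a u = D a b + W v.+1 u.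
    rewrite (Dsplit v.+1 u b) ?(ltnW Hub) // (Dsplit a u b) ?(ltnW Hub) // -(HDW v.+1 u) //; last by apply: ltnW.
    by rewrite [RHS]addnC [D a u + _]addnC addnA.
  have E4 : D a b = W a b + \sum_(a <= i < b) (m \in l i) * w i.
    by rewrite /D /W -big_split /=; apply: eq_big_nat => i Hi; rewrite Hw'.
  pose SW := fun x y => \sum_(x <= i < y) (m \in l i) * w i.
  have SWsplit : forall x y z, x <= y -> y <= z -> SW x z = SW x y + SW y z.
    by move=> x y z H2 H3; rewrite /SW (big_cat_nat H2 H3).
  have SWle : forall x y, SW x y <= W x y.
    move=> x y; apply: leq_sum => i _; by case: (m \in l i); rewrite ?mul1n ?mul0n.
  have SW0 : SW v.+1 u = 0.
    apply: big1_seq => i; rewrite mem_index_iota => /andP [_ Hi].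
    by rewrite (negbTE (Hnos i Hi)) mul0n.
  have H2 : D a b + W v.+1 u <= W a b + W a b.
    rewrite E4 -/(SW a b) -addnA leq_add2l.
    have Hub' : u <= b by exact: ltnW.
    rewrite (SWsplit a v.+1 b Hav1 Hvb) (SWsplit v.+1 u b Hvu Hub').
    rewrite SW0 add0n (Wsplit a v.+1 b Hav1 Hvb) (Wsplit v.+1 u b Hvu Hub').
    rewrite -addnA leq_add // addnC leq_add2l; exact: SWle.
  have H3 : W a b + W a b < 2 ^ k + 2 ^ k.
    by apply: leq_ltn_trans (leq_add (leqnn _) (ltnW Hs)) _; rewrite ltn_add2r.
  rewrite -(ltn_add2r (2 ^ k)).
  apply: leq_ltn_trans H3.
  apply: leq_trans H2; rewrite -H1 leq_add2l; exact: HDu.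
have Hl' : forall x y, a <= x -> y <= b -> forall i, x <= i < y -> uniq (l' i) /\ size (l' i) <= k.
  move=> x y Hx Hy i /andP [H1 H2].
  have [Hu1 Hk] := Hl i (introT andP (conj (leq_trans Hx H1) (leq_trans H2 Hy))).
  by rewrite /l'; split; [apply: rem_uniq | apply: leq_trans (size_rem_le _ _ _) Hk].
have [CL [CLin CLum]] : exists C : nat -> nat, (forall i, a <= i < v -> C i \in l' i) /\
   (forall c d, a <= c -> c <= d -> d < v ->
      exists u, c <= u <= d /\ forall w, c <= w <= d -> w != u -> C w < C u).
  apply: IH => //; last by apply: Hl' => //; exact: ltnW.
  move: Hn; rewrite ltnS => Hn; apply: leq_trans Hn; exact: ltn_sub2r.
have [CR [CRin CRum]] : exists C : nat -> nat, (forall i, v.+1 <= i < b -> C i \in l' i) /\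
   (forall c d, v.+1 <= c -> c <= d -> d < b ->
      exists u, c <= u <= d /\ forall w, c <= w <= d -> w != u -> C w < C u).
  apply: IH => //; last by apply: Hl' => //; exact: (leq_trans Hav).
  move: Hn; rewrite ltnS => Hn; apply: leq_trans Hn; exact: ltn_sub2l.
pose C := fun i => if i == v then m else if i < v then CL i else CR i.
have Cin : forall i, a <= i < b -> i != v -> C i \in l' i.
  move=> i /andP [H1 H2] Hne; rewrite /C (negbTE Hne).
  case: ltnP => Hiv; first by apply: CLin; rewrite H1 Hiv.
  by apply: CRin; rewrite H2 andbT ltn_neqAle eq_sym Hne Hiv.
exists C; split.
  move=> i Hi; case: (eqVneq i v) => [->|Hne]; first by rewrite /C eqxx.
  by apply: (mem_rem (x:=m)); apply: Cin.
move=> c d Hac Hcd Hdb.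
case: (leqP c v) => Hcv; case: (leqP v d) => Hvd.
- exists v; rewrite Hcv Hvd; split => // x /andP [H1 H2] Hne.
  have Hx : a <= x < b by rewrite (leq_trans Hac H1) (leq_ltn_trans H2 Hdb).
  have := Cin x Hx Hne; rewrite /l' (mem_rem_uniq _ (proj1 (Hl x Hx))) inE => /andP [Hne' Hin].
  rewrite {2}/C eqxx ltn_neqAle Hne' /=; exact: Hbound Hin.
- have [u0 [Hu0 Hw0]] := CLum c d Hac Hcd Hvd.
  exists u0; split => // x Hx Hne.
  have Hxv : x < v by apply: leq_ltn_trans (proj2 (andP Hx)) Hvd.
  have Huv : u0 < v by apply: leq_ltn_trans (proj2 (andP Hu0)) Hvd.
  rewrite /C (ltn_eqF Hxv) (ltn_eqF Huv) Hxv Huv; exact: Hw0.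
- have [u0 [Hu0 Hw0]] := CRum c d Hcv Hcd Hdb.
  exists u0; split => // x Hx Hne.
  have Hxv : v < x by apply: leq_trans Hcv (proj1 (andP Hx)).
  have Huv : v < u0 by apply: leq_trans Hcv (proj1 (andP Hu0)).
  rewrite /C (gtn_eqF Hxv) (gtn_eqF Huv).
  have -> : (x < v) = false by apply/negbTE; rewrite -leqNgt; exact: ltnW.
  have -> : (u0 < v) = false by apply/negbTE; rewrite -leqNgt; exact: ltnW.
  exact: Hw0.
- by exfalso; have := leq_trans Hcv (leq_trans Hcd (ltnW Hvd)); rewrite ltnn.
Qed.

Import Order.TTheory GRing.Theory Num.Theory.

Theorem corollary3p5 (R : realFieldType) (P : seq R) (hP : uniq P) :
  exists k : nat, k <= trunc_log 2 (size P) + 1 /\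
    um_choosable (fun v => v \in P) (interval_hyperedge P) k.
Proof.
set n := size P.
set k := trunc_log 2 n + 1.
exists k; split => //.
move=> L HL.
have Hsel : forall v, exists s : seq nat,
    v \in P -> uniq s /\ k <= size s /\ forall c, c \in s -> L v c.
  move=> v; case Hv: (v \in P).
  - have [_ [s Hs]] := HL v Hv. by exists s.
  - by exists [::].
pose sel := fun v => proj1_sig (constructive_indefinite_description _ (Hsel v)).
have selP : forall v, v \in P -> uniq (sel v) /\ k <= size (sel v) /\
    forall c, c \in sel v -> L v c.
  by move=> v; exact: (proj2_sig (constructive_indefinite_description _ (Hsel v))).
pose q := sort <=%O P.
have qsort : sorted <%O q by rewrite sort_lt_sorted.
have quniq : uniq q by rewrite sort_uniq.
have qmem : forall x, (x \in q) = (x \in P) by move=> x; rewrite mem_sort.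
have qsize : size q = n by rewrite size_sort.
have qlt := lt_sorted_ltn_nth (0%R : R) qsort.
have qle : forall i j, i <= j -> j < n -> (nth 0%R q i <= nth 0%R q j)%O.
  move=> i j Hij Hj; rewrite leq_eqVlt in Hij; case/orP: Hij => [/eqP -> //|Hij].
  apply: ltW; rewrite qlt // inE qsize //; exact: ltn_trans Hij Hj.
have qinP : forall i, i < n -> nth 0%R q i \in P.
  by move=> i Hi; rewrite -qmem mem_nth // qsize.
pose l := fun i => take k (sel (nth 0%R q i)).
have Hsum : \sum_(0 <= i < n) 2 ^ (k - size (l i)) < 2 ^ k.
  rewrite (eq_big_nat _ _ (F2 := fun _ => 1)); last first.
    move=> i /andP [_ Hi]; have [_ [Hk _]] := selP _ (qinP i Hi).
    by rewrite /l size_takel // subnn.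
  rewrite sum_nat_const_nat subn0 muln1 /k addn1; exact: trunc_log_ltn.
have [C' [C'in C'um]] := core k n.+1 0 n l (leq_ltn_trans (leq_subr _ _) (ltnSn n))
  (fun i Hi => let: conj Hu (conj Hk _) := selP _ (qinP i (proj2 (andP Hi))) in
     conj (take_uniq _ Hu) (eq_leq (size_takel Hk))) Hsum.
exists (fun x => C' (index x q)); split.
  move=> v Hv; have Hj : index v q < n by rewrite -qsize index_mem qmem.
  have := C'in _ Hj; rewrite /l nth_index ?qmem // => /mem_take.
  by have [_ [_ HL']] := selP v Hv; apply: HL'.
move=> e [[I [HI Hiff]] [x0 Hx0]].
pose eb := fun i => if excluded_middle_informative (e (nth 0%R q i)) then true else false.
have ebP : forall i, eb i -> e (nth 0%R q i).
  by move=> i; rewrite /eb; case: excluded_middle_informative.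
have ebE : forall i, e (nth 0%R q i) -> eb i.
  by move=> i; rewrite /eb; case: excluded_middle_informative.
have x0P : x0 \in P by case: (proj1 (Hiff x0) Hx0).
have Hj0 : index x0 q < n by rewrite -qsize index_mem qmem.
have exE : exists i, (i < n) && eb i.
  by exists (index x0 q); rewrite Hj0 ebE // nth_index // qmem.
have ubE : forall i, (i < n) && eb i -> i <= n by move=> i /andP [H _]; exact: ltnW.
case: (ex_minnP exE) => c /andP [Hcn Hec] Hmin.
case: (ex_maxnP exE ubE) => d /andP [Hdn Hed] Hmax.
have Hcd : c <= d by apply: Hmin; rewrite Hdn Hed.
have [u [Hu Hw]] := C'um c d (leq0n c) Hcd Hdn.
have Hun : u < n by apply: leq_ltn_trans (proj2 (andP Hu)) Hdn.
exists (nth 0%R q u); split.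
  apply/Hiff; split; first exact: qinP.
  have [_ Ic] := proj1 (Hiff _) (ebP _ Hec).
  have [_ Id] := proj1 (Hiff _) (ebP _ Hed).
  apply: (HI _ _ _ Ic Id).
  - by apply: qle => //; case/andP: Hu.
  - by apply: qle => //; case/andP: Hu.
move=> x Hx Hne.
have xP : x \in P by case: (proj1 (Hiff x) Hx).
have Hjx : index x q < n by rewrite -qsize index_mem qmem.
have Hex : eb (index x q) by apply: ebE; rewrite nth_index // qmem.
rewrite index_uniq ?qsize //; apply: Hw.
  by rewrite Hmin ?Hmax // Hjx Hex.
apply/eqP => E; apply: Hne; by rewrite -E nth_index // qmem.
Qed.
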